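(* Let $\mathcal{A}=M_{n_1}\oplus\cdots\oplus M_{n_d}$, viewed as the block-diagonal subalgebra of $M_m$ with $m=n_1+\cdots+n_d$, let $\tau$ be a completely positive map on $\mathcal{A}$, and let $\widetilde{\tau}$ be its canonical extension to $M_m$. Then $\tau$ is irreducible if and only if $\widetilde{\tau}$ is irreducible. Moreover, $r(\tau)=r(\widetilde{\tau})$.
   Context: The canonical extension is $\widetilde{\tau}=\iota\circ\tau\circ\phi$, where $\iota:\mathcal{A}\hookrightarrow M_m$ is the block-diagonal embedding and $\phi:M_m\to\mathcal{A}$ sends a block matrix $X=(X_{ij})$ (blocks of sizes $n_i\times n_j$) to its block-diagonal part $X_{11}\oplus\cdots\oplus X_{dd}$. A positive map $\varphi$ on a finite dimensional $C^*$-algebra $\mathcal{B}$ is irreducible if there is no projection $p\in\mathcal{B}$ with $p\ne0,1$ such that $\varphi(p\mathcal{B}p)\subseteq p\mathcal{B}p$. $r(\cdot)$ denotes spectral radius. *)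

(* Defs.v *)
From HB Require Import structures.
From mathcomp Require Import all_boot all_order all_algebra.
Set Implicit Arguments. Unset Strict Implicit. Unset Printing Implicit Defensive.
Import Order.TTheory GRing.Theory Num.Theory.
Local Open Scope ring_scope.

Definition adjmx (C : numClosedFieldType) (p q : nat) (M : 'M[C]_(p, q)) : 'M[C]_(q, p) :=
  (map_mx Num.conj M)^T.

Definition psd (C : numClosedFieldType) (N : nat) (M : 'M[C]_N) : Prop :=
  exists B : 'M[C]_N, M = adjmx B *m B.

Definition is_proj (C : numClosedFieldType) (N : nat) (P : 'M[C]_N) : Prop :=
  P = adjmx P /\ P *m P = P.

Section Blocks.
Variables (C : numClosedFieldType) (d : nat) (n : 'I_d -> nat).
Local Notation m := (\sum_(i < d) n i)%N.

Definition inA (X : 'M[C]_m) : Prop :=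
  exists B : forall i : 'I_d, 'M[C]_(n i), X = mxdiag B.

(* iota o phi : keep the diagonal blocks only *)
Definition diagpart (X : 'M[C]_m) : 'M[C]_m :=
  mxdiag (fun i : 'I_d => submxblock X i i).

Definition canon_ext (tau : 'M[C]_m -> 'M[C]_m) : 'M[C]_m -> 'M[C]_m :=
  fun X => tau (diagpart X).

Definition maps_A (tau : 'M[C]_m -> 'M[C]_m) : Prop :=
  forall X, inA X -> inA (tau X).

(* complete positivity on A: for every k, id_k (x) tau maps positive elements
   of M_k(A) (seen inside M_k(M_m)) to positive elements *)
Definition cp_on_A (tau : 'M[C]_m -> 'M[C]_m) : Prop :=
  forall (k : nat) (X : 'I_k -> 'I_k -> 'M[C]_m),
    (forall a b, inA (X a b)) ->
    psd (mxblock (p_ := fun _ : 'I_k => m) (q_ := fun _ : 'I_k => m) X) ->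
    psd (mxblock (p_ := fun _ : 'I_k => m) (q_ := fun _ : 'I_k => m)
                 (fun a b => tau (X a b))).
End Blocks.

Section OnSubalg.
Variables (C : numClosedFieldType) (N : nat) (S : 'M[C]_N -> Prop).

Definition irreducible_on (f : 'M[C]_N -> 'M[C]_N) : Prop :=
  ~ exists P : 'M[C]_N,
      [/\ S P, is_proj P, P <> 0, P <> 1%:M &
          forall X, S X -> exists Y, S Y /\ f (P *m X *m P) = P *m Y *m P].

Definition eigenvalue_on (f : 'M[C]_N -> 'M[C]_N) (l : C) : Prop :=
  exists X : 'M[C]_N, [/\ S X, X <> 0 & f X = l *: X].

Definition spectral_radius_is (f : 'M[C]_N -> 'M[C]_N) (r : C) : Prop :=
  (exists l, eigenvalue_on f l /\ `|l| = r) /\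
  (forall l, eigenvalue_on f l -> `|l| <= r).
End OnSubalg.

Definition whole (C : numClosedFieldType) (N : nat) : 'M[C]_N -> Prop := fun _ => True.

(* Main.v *)
Require Import Defs.
From HB Require Import structures.
From mathcomp Require Import all_boot all_order all_algebra.
From mathcomp Require Import ring.
From Stdlib Require Import Classical.
Set Implicit Arguments. Unset Strict Implicit. Unset Printing Implicit Defensive.
Import Order.TTheory GRing.Theory Num.Theory.
Local Open Scope ring_scope.

Section Adj.
Variable C : numClosedFieldType.

Lemma adjmxE p q (M : 'M[C]_(p, q)) i j : adjmx M i j = (M j i)^*.
Proof. by rewrite /adjmx !mxE. Qed.

Lemma adjmxK p q (M : 'M[C]_(p, q)) : adjmx (adjmx M) = M.
Proof. by apply/matrixP => i j; rewrite !adjmxE conjCK. Qed.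

Lemma adjmx_mul p q r (A : 'M[C]_(p, q)) (B : 'M[C]_(q, r)) :
  adjmx (A *m B) = adjmx B *m adjmx A.
Proof.
apply/matrixP => i j; rewrite adjmxE !mxE rmorph_sum; apply: eq_bigr => k _.
by rewrite !adjmxE rmorphM mulrC.
Qed.

Lemma adjmxD p q (A B : 'M[C]_(p, q)) : adjmx (A + B) = adjmx A + adjmx B.
Proof. by apply/matrixP => i j; rewrite !(adjmxE, mxE) rmorphD. Qed.

Lemma adjmxN p q (A : 'M[C]_(p, q)) : adjmx (- A) = - adjmx A.
Proof. by apply/matrixP => i j; rewrite !(adjmxE, mxE) rmorphN. Qed.

Lemma adjmxB p q (A B : 'M[C]_(p, q)) : adjmx (A - B) = adjmx A - adjmx B.
Proof. by rewrite adjmxD adjmxN. Qed.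

Lemma adjmxZ p q a (A : 'M[C]_(p, q)) : adjmx (a *: A) = a^* *: adjmx A.
Proof. by apply/matrixP => i j; rewrite !(adjmxE, mxE) rmorphM. Qed.

Lemma adjmx1 p : adjmx (1%:M : 'M[C]_p) = 1%:M.
Proof. by apply/matrixP => i j; rewrite !(adjmxE, mxE) eq_sym rmorph_nat. Qed.

Lemma adjmx0 p q : adjmx (0 : 'M[C]_(p, q)) = 0.
Proof. by apply/matrixP => i j; rewrite !(adjmxE, mxE) rmorph0. Qed.

Lemma adjmx_diag p (s : 'rV[C]_p) :
  adjmx (diag_mx s) = diag_mx (\row_j (s 0 j)^*).
Proof.
apply/matrixP => i j; rewrite !(adjmxE, mxE) eq_sym.
by case: eqP => [->|]; rewrite ?mulr1n ?mulr0n ?rmorph0.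
Qed.

Lemma adjmx_sum p q (I : finType) (F : I -> 'M[C]_(p, q)) :
  adjmx (\sum_i F i) = \sum_i adjmx (F i).
Proof.
apply/matrixP => i j; rewrite !(adjmxE, summxE) rmorph_sum.
by apply: eq_bigr => k _; rewrite adjmxE.
Qed.

Lemma normsqE k (w : 'rV[C]_k) : (w *m adjmx w) 0 0 = \sum_j w 0 j * (w 0 j)^*.
Proof. by rewrite mxE; apply: eq_bigr => j _; rewrite adjmxE. Qed.

Lemma normsq_ge0 k (w : 'rV[C]_k) : 0 <= (w *m adjmx w) 0 0.
Proof. by rewrite normsqE; apply: sumr_ge0 => j _; apply: mul_conjC_ge0. Qed.

Lemma normsq_eq0 k (w : 'rV[C]_k) : (w *m adjmx w) 0 0 = 0 -> w = 0.
Proof.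
rewrite normsqE => /psumr_eq0P H; apply/rowP => j; rewrite mxE.
by apply/eqP; rewrite -mul_conjC_eq0; apply/eqP; apply: H => // i _; apply: mul_conjC_ge0.
Qed.

Lemma rows_eq0 p q (A : 'M[C]_(p, q)) : (forall v : 'rV_p, v *m A = 0) -> A = 0.
Proof.
move=> H; apply/row_matrixP => i; by rewrite rowE H row0.
Qed.

End Adj.

Section Pos.
Variables (C : numClosedFieldType) (N : nat).
Implicit Types (A B M X R S Q : 'M[C]_N) (v : 'rV[C]_N).

Definition herm M := adjmx M = M.
Definition qf M v := (v *m M *m adjmx v) 0 0.
Definition pos M := herm M /\ forall v, 0 <= qf M v.

Lemma qfD A B v : qf (A + B) v = qf A v + qf B v.
Proof. by rewrite /qf mulmxDr mulmxDl mxE. Qed.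
Lemma qfN A v : qf (- A) v = - qf A v.
Proof. by rewrite /qf mulmxN mulNmx mxE. Qed.
Lemma qfB A B v : qf (A - B) v = qf A v - qf B v.
Proof. by rewrite qfD qfN. Qed.
Lemma qfZ a A v : qf (a *: A) v = a * qf A v.
Proof. by rewrite /qf -scalemxAr -scalemxAl mxE. Qed.

Lemma qf_adj B v : qf (adjmx B *m B) v = ((v *m adjmx B) *m adjmx (v *m adjmx B)) 0 0.
Proof. by rewrite /qf adjmx_mul adjmxK !mulmxA. Qed.

Lemma psd_pos M : psd M -> pos M.
Proof.
move=> [B ->]; split; first by rewrite /herm adjmx_mul adjmxK.
by move=> v; rewrite qf_adj normsq_ge0.
Qed.

Lemma pos_add A B : pos A -> pos B -> pos (A + B).
Proof.
move=> [hA pA] [hB pB]; split; first by rewrite /herm adjmxD hA hB.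
by move=> v; rewrite qfD addr_ge0.
Qed.

Lemma pos_scale c A : 0 <= c -> pos A -> pos (c *: A).
Proof.
move=> c0 [hA pA]; split; last by move=> v; rewrite qfZ mulr_ge0.
by rewrite /herm adjmxZ hA conj_Creal // ger0_real.
Qed.

Lemma pos0 : pos 0.
Proof. by split; [rewrite /herm adjmx0 | move=> v; rewrite /qf mulmx0 mul0mx mxE]. Qed.

Lemma pos_sum (I : finType) (F : I -> 'M[C]_N) : (forall i, pos (F i)) -> pos (\sum_i F i).
Proof.
move=> H; apply: (big_ind pos) => //; [exact: pos0 | exact: pos_add].
Qed.

Lemma pos_conj A B : pos A -> pos (adjmx B *m A *m B).
Proof.
move=> [hA pA]; split.
  by rewrite /herm !adjmx_mul adjmxK hA mulmxA.
move=> v; have := pA (v *m adjmx B).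
by rewrite /qf adjmx_mul adjmxK !mulmxA.
Qed.

Local Open Scope sesquilinear_scope.
Lemma adjmx_tstar p q (U : 'M[C]_(p, q)) : adjmx U = U ^t*.
Proof. by rewrite /adjmx map_trmx. Qed.
Local Close Scope sesquilinear_scope.

Lemma spec M : herm M -> exists (U : 'M[C]_N) (s : 'rV[C]_N),
  [/\ U *m adjmx U = 1%:M, adjmx U *m U = 1%:M & M = adjmx U *m diag_mx s *m U].
Proof.
move=> hM.
have nM : M \is normalmx by apply/normalmxP; rewrite -adjmx_tstar hM.
have := orthomx_spectralP nM.
have Uu := spectral_unitarymx M.
rewrite invmx_unitary // -adjmx_tstar => ->.
exists (spectralmx M), (spectral_diag M); split => //.
  by rewrite adjmx_tstar; apply/unitarymxP.
by rewrite adjmx_tstar -invmx_unitary // mulVmx // unitarymx_unit.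
Qed.

Definition cd (U : 'M[C]_N) (f : 'I_N -> C) := adjmx U *m diag_mx (\row_j f j) *m U.

Lemma cd_ext U f g : (forall j, f j = g j) -> cd U f = cd U g.
Proof. by move=> H; rewrite /cd; congr (_ *m diag_mx _ *m _); apply/rowP => j; rewrite !mxE H. Qed.

Lemma cdD U f g : cd U f + cd U g = cd U (fun j => f j + g j).
Proof.
rewrite /cd -mulmxDl -mulmxDr -linearD /=; congr (_ *m diag_mx _ *m _).
by apply/rowP => j; rewrite !mxE.
Qed.

Lemma cdZ U a f : a *: cd U f = cd U (fun j => a * f j).
Proof.
rewrite /cd scalemxAl scalemxAr -linearZ /=; congr (_ *m diag_mx _ *m _).
by apply/rowP => j; rewrite !mxE.
Qed.

Lemma cdN U f : - cd U f = cd U (fun j => - f j).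
Proof. by rewrite -scaleN1r cdZ; apply: cd_ext => j; rewrite mulN1r. Qed.

Lemma cdB U f g : cd U f - cd U g = cd U (fun j => f j - g j).
Proof. by rewrite cdN cdD. Qed.

Lemma cdM U f g : U *m adjmx U = 1%:M -> cd U f *m cd U g = cd U (fun j => f j * g j).
Proof.
move=> HU; rewrite /cd !mulmxA -[_ *m U *m adjmx U]mulmxA HU mulmx1.
rewrite -[_ *m diag_mx _ *m diag_mx _]mulmxA mulmx_diag.
by congr (_ *m diag_mx _ *m _); apply/rowP => j; rewrite !mxE.
Qed.

Lemma cd1 U : adjmx U *m U = 1%:M -> cd U (fun=> 1) = 1%:M.
Proof.
move=> HU; rewrite /cd (_ : \row_j 1 = const_mx 1); last by apply/rowP => j; rewrite !mxE.
by rewrite diag_const_mx mulmx1.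
Qed.

Lemma cd_psd U f : (forall j, 0 <= f j) -> psd (cd U f).
Proof.
move=> f0; exists (diag_mx (\row_j sqrtC (f j)) *m U).
rewrite adjmx_mul adjmx_diag mulmxA -[_ *m diag_mx _ *m diag_mx _]mulmxA mulmx_diag.
congr (_ *m diag_mx _ *m _); apply/rowP => j; rewrite !mxE.
rewrite conj_Creal ?ger0_real ?sqrtC_ge0 // -expr2 sqrtCK //.
Qed.

Lemma cd_pos U f : (forall j, 0 <= f j) -> pos (cd U f).
Proof. by move=> f0; apply/psd_pos/cd_psd. Qed.

Lemma pos_spec M : pos M -> exists (U : 'M[C]_N) (f : 'I_N -> C),
  [/\ U *m adjmx U = 1%:M, adjmx U *m U = 1%:M, forall j, 0 <= f j & M = cd U f].
Proof.
move=> [hM pM]; have [U [s [H1 H2 HM]]] := spec hM.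
exists U, (fun j => s 0 j); split => //; last first.
  by rewrite HM /cd; congr (_ *m diag_mx _ *m _); apply/rowP => j; rewrite !mxE.
move=> j; have := pM (delta_mx 0 j *m U).
rewrite /qf HM adjmx_mul !mulmxA -[_ *m U *m adjmx U]mulmxA H1 mulmx1.
rewrite -[_ *m U *m adjmx U]mulmxA H1 mulmx1 mul_mx_diag mxE (bigD1 j) //= big1 ?addr0.
  by rewrite !mxE !eqxx /= mul1r conjC1 mulr1.
move=> k /negPf nkj; by rewrite !mxE nkj /= !mul0r.
Qed.


Lemma pos_psd M : pos M -> psd M.
Proof. by move=> /pos_spec [U [f [_ _ f0 ->]]]; apply: cd_psd. Qed.

Lemma pos_ker M v : pos M -> qf M v = 0 -> v *m M = 0.
Proof.
move=> /pos_psd [B ->]; rewrite qf_adj => /normsq_eq0 H.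
by rewrite mulmxA H mul0mx.
Qed.

Lemma pos_herm M : pos M -> adjmx M = M.
Proof. by case. Qed.

Lemma pos_sub_ker X R (c : C) (K : 'M[C]_N) :
  pos X -> pos (c *: R - X) -> K *m R = 0 -> K *m X = 0.
Proof.
move=> pX [_ pRX] KR; apply/row_matrixP => i; rewrite row0 row_mul.
apply: pos_ker => //; set v := row i K.
have vR : v *m R = 0 by rewrite /v -row_mul KR row0.
have := pRX v; rewrite qfB qfZ {1}/qf vR mul0mx mxE mulr0 sub0r oppr_ge0 => h.
by apply/eqP; rewrite eq_le h; case: pX => _ ->.
Qed.

Definition lem X R := exists c : C, 0 <= c /\ pos (c *: R - X).

Lemma lem_trans X R S : lem X R -> lem R S -> lem X S.
Proof.
move=> [c1 [c10 h1]] [c2 [c20 h2]]; exists (c1 * c2); split; first exact: mulr_ge0.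
have -> : (c1 * c2) *: S - X = c1 *: (c2 *: S - R) + (c1 *: R - X).
  by rewrite scalerBr scalerA addrA subrK.
by apply: pos_add => //; apply: pos_scale.
Qed.

Lemma lem_ker X R (K : 'M[C]_N) : pos X -> lem X R -> K *m R = 0 -> K *m X = 0.
Proof. by move=> pX [c [_ h]] KR; apply: (pos_sub_ker pX h KR). Qed.

Lemma pos_bound M : pos M -> exists c : C, 0 <= c /\ pos (c *: 1%:M - M).
Proof.
move=> /pos_spec [U [f [H1 H2 f0 ->]]].
exists (\sum_j f j); split; first by apply: sumr_ge0.
rewrite -(cd1 H2) cdZ cdB; apply: cd_pos => j; rewrite mulr1 subr_ge0.
by rewrite (bigD1 j) //= lerDl sumr_ge0.
Qed.

Lemma lem_proj Z Q : herm Q -> Q *m Q = Q -> pos Z -> Q *m Z *m Q = Z -> lem Z Q.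
Proof.
move=> hQ QQ pZ QZQ; have [c [c0 h]] := pos_bound pZ.
exists c; split => //; have := pos_conj Q h; rewrite hQ.
by rewrite mulmxBr mulmxBl QZQ -scalemxAr mulmx1 -scalemxAl QQ.
Qed.

Lemma supp_proj S : pos S -> exists (Q W : 'M[C]_N),
  [/\ herm Q, Q *m Q = Q, Q *m S = S, Q = W *m S & lem Q S].
Proof.
move=> /pos_spec [U [f [H1 H2 f0 ->]]].
pose J j : C := (f j != 0)%:R.
exists (cd U J), (cd U (fun j => (f j)^-1)); split.
- by case: (cd_pos U (f := J)) => // j; rewrite /J ler0n.
- by rewrite cdM //; apply: cd_ext => j; rewrite /J; case: (f j != 0); rewrite ?mulr1 ?mulr0.
- by rewrite cdM //; apply: cd_ext => j; rewrite /J; case: eqP => [->|]; rewrite ?mulr0 ?mul1r.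
- rewrite cdM //; apply: cd_ext => j; rewrite /J; case: eqP => [->|/eqP h].
    by rewrite invr0 mulr0.
  by rewrite mulVf.
exists (\sum_j (f j)^-1); split; first by apply: sumr_ge0 => j _; rewrite invr_ge0.
rewrite cdZ cdB; apply: cd_pos => j; rewrite /J subr_ge0.
case: eqP => [->|/eqP h]; first by rewrite mulr0.
rewrite (bigD1 j) //= mulrDl mulVf // lerDl mulr_ge0 // sumr_ge0 // => k _.
by rewrite invr_ge0.
Qed.

Lemma adj_mul_eq0 B : adjmx B *m B = 0 -> B = 0.
Proof.
move=> H; suff hB : adjmx B = 0 by rewrite -[B]adjmxK hB adjmx0.
apply/rows_eq0 => v.
apply: (@normsq_eq0 C); have := qf_adj B v.
by rewrite H /qf mulmx0 mul0mx mxE => <-.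
Qed.

End Pos.


Lemma psd_reindex (C : numClosedFieldType) N1 N2 (g : 'I_N1 -> 'I_N2) (h : 'I_N2 -> 'I_N1) :
  cancel g h -> cancel h g -> forall M : 'M[C]_N2, psd M -> psd (\matrix_(s,t) M (g s) (g t)).
Proof.
move=> gh hg M [B ->]; exists (\matrix_(s,t) B (g s) (g t)).
apply/matrixP => s t; rewrite !mxE (reindex g) /=; last by apply: onW_bij; exists h.
by apply: eq_bigr => u _; rewrite !(adjmxE, mxE).
Qed.

Section Blk.
Variables (C : numClosedFieldType) (d : nat) (n : 'I_d -> nat).
Local Notation m := (\sum_(i < d) n i)%N.
Local Notation blk := (@tagnat.sig1 d n).
Local Notation inA' := (@inA C d n).
Implicit Types X Y Q : 'M[C]_m.

Lemma diagpartE X s t :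
  diagpart X s t = if blk s == blk t then X s t else 0.
Proof.
rewrite /diagpart /mxdiag mxE.
case: eqP => e; last by rewrite mxE.
rewrite /submxblock.
move: (tagnat.sig2 s) (tagnat.sig2 t) (tagnat.sig2K s) (tagnat.sig2K t).
move: (blk t) e => k e; case: k / e => a b Ha Hb.
by rewrite conform_mx_id mxE Ha Hb.
Qed.

Lemma inAE X : inA' X <-> (forall s t, blk s != blk t -> X s t = 0).
Proof.
split.
  move=> [B ->] s t /negPf h; by rewrite /mxdiag mxE h mxE.
move=> H; exists (fun i => submxblock X i i); apply/matrixP => s t.
have := diagpartE X s t; rewrite /diagpart => ->.
by case: eqP => // /eqP /H ->.
Qed.

Definition E (k : 'I_d) : 'M[C]_m := diag_mx (\row_s (blk s == k)%:R).

Lemma EE k l : E k *m E l = if k == l then E k else 0.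
Proof.
rewrite /E mulmx_diag; case: (eqVneq k l) => [<-|nkl].
  by congr diag_mx; apply/rowP => s; rewrite !mxE -natrM mulnb andbb.
apply/matrixP => s t; rewrite !mxE.
rewrite -natrM mulnb.
by have [->|_] := eqVneq (blk s) k; rewrite /= ?eqxx ?(negPf nkl) /= ?mul0rn.
Qed.

Lemma E_herm k : herm (E k).
Proof. by rewrite /herm /E adjmx_diag; congr diag_mx; apply/rowP => s; rewrite !mxE rmorph_nat. Qed.

Lemma sumE : \sum_k E k = 1%:M.
Proof.
apply/matrixP => s t; rewrite summxE !mxE.
rewrite (bigD1 (blk s)) //= [X in _ + X]big1; last first.
  by move=> k /negPf nk; rewrite !mxE eq_sym nk mul0rn.
by rewrite addr0 !mxE eqxx.
Qed.

Lemma EX k X : E k *m X = \matrix_(s, t) ((blk s == k)%:R * X s t).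
Proof. by rewrite /E mul_diag_mx; apply/matrixP => s t; rewrite !mxE. Qed.

Lemma XE k X : X *m E k = \matrix_(s, t) (X s t * (blk t == k)%:R).
Proof. by rewrite /E mul_mx_diag; apply/matrixP => s t; rewrite !mxE. Qed.

Lemma inA_comm X : inA' X <-> (forall k, E k *m X = X *m E k).
Proof.
rewrite inAE; split.
  move=> H k; rewrite EX XE; apply/matrixP => s t; rewrite !mxE.
  have [e|ne] := eqVneq (blk s) (blk t); first by rewrite e mulrC.
  by rewrite H // mulr0 mul0r.
move=> H s t ne; have /matrixP /(_ s t) := H (blk s).
by rewrite EX XE !mxE eqxx mul1r eq_sym (negPf ne) mulr0.
Qed.

Lemma diagpart_sum X : diagpart X = \sum_k E k *m X *m E k.
Proof.
apply/matrixP => s t; rewrite diagpartE summxE.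
rewrite [RHS](bigD1 (blk s)) //= [X in _ + X]big1; last first.
  by move=> k /negPf nk; rewrite XE EX !mxE eq_sym nk mul0r mul0r.
rewrite addr0 XE EX !mxE eqxx mul1r.
by have [_|_] := eqVneq (blk s) (blk t); rewrite ?mulr1 ?mulr0.
Qed.

Lemma inA1 : inA' (1%:M : 'M[C]_m).
Proof. by apply/inA_comm => k; rewrite mulmx1 mul1mx. Qed.

Lemma inAD X Y : inA' X -> inA' Y -> inA' (X + Y).
Proof. by move=> /inA_comm hX /inA_comm hY; apply/inA_comm => k; rewrite mulmxDr mulmxDl hX hY. Qed.

Lemma inAZ a X : inA' X -> inA' (a *: X).
Proof. by move=> /inA_comm hX; apply/inA_comm => k; rewrite -scalemxAl -scalemxAr hX. Qed.

Lemma inAN X : inA' X -> inA' (- X).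
Proof. by move=> hX; rewrite -scaleN1r; apply: inAZ. Qed.

Lemma inAB X Y : inA' X -> inA' Y -> inA' (X - Y).
Proof. by move=> hX hY; apply: inAD => //; apply: inAN. Qed.

Lemma inAM X Y : inA' X -> inA' Y -> inA' (X *m Y).
Proof.
by move=> /inA_comm hX /inA_comm hY; apply/inA_comm => k; rewrite mulmxA hX -mulmxA hY mulmxA.
Qed.

Lemma inA_adj X : inA' X -> inA' (adjmx X).
Proof.
move=> /inA_comm hX; apply/inA_comm => k.
have h := E_herm k; rewrite /herm in h.
by rewrite -{1}h -adjmx_mul -hX adjmx_mul h.
Qed.

Lemma inA_diagpart X : inA' (diagpart X).
Proof.
apply/inA_comm => k; rewrite diagpart_sum mulmx_sumr mulmx_suml.
apply: eq_bigr => l _; rewrite !mulmxA EE -!mulmxA EE.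
by have [->|_] := eqVneq k l; rewrite ?mulmx0 ?mul0mx ?mulmxA.
Qed.

Lemma diagpart_id X : inA' X -> diagpart X = X.
Proof.
move=> /inA_comm hX; rewrite diagpart_sum.
have -> : \sum_k E k *m X *m E k = \sum_k E k *m X.
  by apply: eq_bigr => k _; rewrite -mulmxA -hX mulmxA EE eqxx.
by rewrite -mulmx_suml sumE mul1mx.
Qed.

Lemma diagpart_conj Q X : inA' Q -> diagpart (Q *m X *m Q) = Q *m diagpart X *m Q.
Proof.
move=> /inA_comm hQ; rewrite !diagpart_sum mulmx_sumr mulmx_suml.
by apply: eq_bigr => k _; rewrite !mulmxA hQ -!mulmxA hQ.
Qed.

Lemma diagpart_lin a X Y : diagpart (a *: X + Y) = a *: diagpart X + diagpart Y.
Proof.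
rewrite !diagpart_sum scaler_sumr -big_split; apply: eq_bigr => k _ /=.
by rewrite mulmxDr mulmxDl -scalemxAr -scalemxAl.
Qed.

Lemma pos_diagpart X : pos X -> pos (diagpart X).
Proof.
move=> pX; rewrite diagpart_sum; apply: pos_sum => k.
by have := pos_conj (E k) pX; rewrite E_herm.
Qed.

End Blk.


Section Tau.
Variables (C : numClosedFieldType) (d : nat) (n : 'I_d -> nat).
Local Notation m := (\sum_(i < d) n i)%N.
Local Notation blk := (@tagnat.sig1 d n).
Local Notation inA' := (@inA C d n).
Implicit Types X Y Q : 'M[C]_m.

Lemma cp_pos (tau : 'M[C]_m -> 'M[C]_m) : @cp_on_A C d n tau ->
  forall X, inA' X -> pos X -> pos (tau X).
Proof.
move=> Hcp X hX pX.
pose g (s : 'I_(\sum_(i < 1) m)) : 'I_m := @tagnat.sig2 1 (fun _ => m) s.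
pose h (i : 'I_m) : 'I_(\sum_(i < 1) m) := @tagnat.Rank 1 (fun _ => m) ord0 i.
have gh : cancel g h.
  move=> s; rewrite /g /h -[in RHS](tagnat.sig2K s).
  by move: (tagnat.sig2 s); rewrite [tagnat.sig1 s]ord1.
have hg : cancel h g.
  by move=> i; rewrite /g /h tagnat.Rank2K cast_ord_id.
have e (Y : 'M[C]_m) : mxblock (p_ := fun _ : 'I_1 => m) (q_ := fun _ : 'I_1 => m) (fun _ _ => Y)
    = \matrix_(s, t) Y (g s) (g t).
  by apply/matrixP => s t; rewrite !mxE.
have := Hcp 1%N (fun _ _ => X) (fun _ _ => hX).
rewrite !e => /(_ (psd_reindex gh hg (pos_psd pX))) /(psd_reindex hg gh).
have -> : \matrix_(s, t) (\matrix_(s0, t0) tau X (g s0) (g t0)) (h s) (h t) = tau X.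
  by apply/matrixP => s t; rewrite !mxE !hg.
exact: psd_pos.
Qed.

End Tau.


Section Polar.
Variables (C : numClosedFieldType) (N : nat).

Lemma polar1 (X : 'M[C]_N) a : a^* * a = 1 ->
  adjmx (1%:M + a *: X) *m (1%:M + a *: X) = 1%:M + a *: X + a^* *: adjmx X + adjmx X *m X.
Proof.
move=> ha; rewrite adjmxD adjmx1 adjmxZ mulmxDl !mul1mx mulmxDr mulmx1.
by rewrite -scalemxAl -scalemxAr scalerA ha scale1r !addrA.
Qed.

Lemma polar_gen (O X Y Z : 'M[C]_N) :
  4 *: X = (O + X + Y + Z) - (O + (-1) *: X + (-1) *: Y + Z)
           + (- 'i) *: (O + 'i *: X + (- 'i) *: Y + Z) + 'i *: (O + (- 'i) *: X + 'i *: Y + Z).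
Proof.
apply/matrixP => s t; rewrite !mxE.
move: (O s t) (X s t) (Y s t) (Z s t) => o x y z.
have := @sqrCi C; move: ('i : C) => j hj.
apply/eqP; rewrite -subr_eq0; apply/eqP.
transitivity ((j ^+ 2 + 1) * (2 * x - 2 * y)); first ring.
by rewrite hj addNr mul0r.
Qed.

Lemma polar (X : 'M[C]_N) (Z := fun a => adjmx (1%:M + a *: X) *m (1%:M + a *: X)) :
  4 *: X = Z 1 - Z (-1) + (- 'i) *: Z 'i + 'i *: Z (- 'i).
Proof.
have c1 : (1:C)^* = 1 := conjC1 C.
have cN1 : (-1:C)^* = -1 := conjCN1 C.
have ci : ('i:C)^* = -'i := conjCi C.
have cNi : (-'i:C)^* = 'i by apply: (canLR (@conjCK C)); rewrite conjCi.
have ii : ('i:C) * 'i = -1 by rewrite -expr2 sqrCi.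
rewrite /Z !polar1; [idtac | by rewrite cNi mulrN ii opprK | by rewrite ci mulNr ii opprK
  | by rewrite cN1 mulrNN mulr1 | by rewrite c1 mulr1].
rewrite c1 cN1 ci cNi [1 *: X]scale1r [1 *: adjmx X]scale1r.
exact: (polar_gen (1%:M) X (adjmx X) (adjmx X *m X)).
Qed.
End Polar.

Section Inv.
Variables (C : numClosedFieldType) (d : nat) (n : 'I_d -> nat).
Local Notation m := (\sum_(i < d) n i)%N.
Local Notation inA' := (@inA C d n).
Variable tau : {linear 'M[C]_m -> 'M[C]_m}.
Hypothesis tauA : forall X, inA' X -> inA' (tau X).
Hypothesis taupos : forall X, inA' X -> pos X -> pos (tau X).

Lemma inv_crit (Q : 'M[C]_m) : inA' Q -> herm Q -> Q *m Q = Q ->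
  (forall Z, inA' Z -> pos Z -> Q *m Z *m Q = Z -> (1%:M - Q) *m tau Z = 0) ->
  forall X, inA' X -> exists Y, inA' Y /\ tau (Q *m X *m Q) = Q *m Y *m Q.
Proof.
move=> AQ hQ QQ H.
have key Z : inA' Z -> pos Z -> Q *m Z *m Q = Z -> Q *m tau Z *m Q = tau Z.
  move=> AZ pZ QZQ; have := H Z AZ pZ QZQ.
  rewrite mulmxBl mul1mx => /eqP; rewrite subr_eq0 => /eqP e1.
  have e2 : tau Z *m Q = tau Z.
    have [ht _] := taupos AZ pZ.
    by rewrite -[in LHS]ht -hQ -adjmx_mul -e1 ht.
  by rewrite -e1 e2.
move=> X AX; exists (tau (Q *m X *m Q)); split.
  by apply: tauA; apply: inAM => //; apply: inAM.
pose W a := Q *m (adjmx (1%:M + a *: X) *m (1%:M + a *: X)) *m Q.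
have AW a : inA' (W a).
  apply: inAM => //; apply: inAM => //; apply: inAM; apply: inA_adj || idtac;
  by apply: inAD; [exact: inA1 | exact: inAZ].
have pW a : pos (W a).
  by have := pos_conj Q (psd_pos (ex_intro _ (1%:M + a *: X) erefl)); rewrite hQ.
have QWQ a : Q *m W a *m Q = W a.
  by rewrite /W !mulmxA QQ -[_ *m Q *m Q]mulmxA QQ.
have keyW a : Q *m tau (W a) *m Q = tau (W a) := key _ (AW a) (pW a) (QWQ a).
have Flin (A B C' D : 'M[C]_m) a b : Q *m (A - B + a *: C' + b *: D) *m Q =
    Q *m A *m Q - Q *m B *m Q + a *: (Q *m C' *m Q) + b *: (Q *m D *m Q).
  by rewrite !(mulmxDr, mulmxBr, mulmxDl, mulmxBl) mulmxN mulNmx -!scalemxAr -!scalemxAl.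
have e4 : 4 *: (Q *m X *m Q) = W 1 - W (-1) + (- 'i) *: W 'i + 'i *: W (- 'i).
  by rewrite scalemxAl scalemxAr (polar X) Flin.
have n4 : (4 : C) != 0 by rewrite pnatr_eq0.
apply: (scalerI n4); rewrite -linearZ /= e4 [in RHS]scalemxAl [in RHS]scalemxAr -[in RHS]linearZ /= e4.
have tlin (A B C' D : 'M[C]_m) (a b : C) :
    tau (A - B + a *: C' + b *: D) = tau A - tau B + a *: tau C' + b *: tau D.
  by rewrite !linearD linearN !linearZ.
by rewrite tlin Flin !keyW.
Qed.
End Inv.


Lemma proj_triv (C : numClosedFieldType) N (P : 'M[C]_N) : (forall s t : 'I_N, s = t) ->
  P *m P = P -> P = 0 \/ P = 1%:M.
Proof.
case: N P => [|N] P H PP.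
  by left; apply/matrixP => [[i hi]].
have e : P ord0 ord0 * P ord0 ord0 = P ord0 ord0.
  have /matrixP /(_ ord0 ord0) := PP; rewrite mxE (bigD1 ord0) //= big1 ?addr0 //.
  by move=> k /eqP nk; rewrite (H k ord0) in nk.
have : P ord0 ord0 * (P ord0 ord0 - 1) == 0 by rewrite mulrBr mulr1 e subrr.
rewrite mulf_eq0 subr_eq0 => /orP [] /eqP h; [left|right];
  by apply/matrixP => i j; rewrite (H i ord0) (H j ord0) !mxE ?eqxx h.
Qed.

Lemma proj_fix (C : numClosedFieldType) N (P Y : 'M[C]_N) : herm Y -> herm P ->
  (1%:M - P) *m Y = 0 -> P *m Y *m P = Y.
Proof.
move=> hY hP; rewrite mulmxBl mul1mx => /eqP; rewrite subr_eq0 => /eqP e1.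
have e2 : Y *m P = Y by rewrite -[in LHS]hY -hP -adjmx_mul -e1 hY.
by rewrite -e1 e2.
Qed.

Lemma pos_proj (C : numClosedFieldType) N (P : 'M[C]_N) : herm P -> P *m P = P -> pos P.
Proof. by move=> hP PP; apply: psd_pos; exists P; rewrite hP PP. Qed.

Lemma ker_proj (C : numClosedFieldType) N (P Y : 'M[C]_N) : P *m Y = Y -> (1%:M - P) *m Y = 0.
Proof. by move=> h; rewrite mulmxBl mul1mx h subrr. Qed.

Section Main.
Variables (C : numClosedFieldType) (d : nat) (n : 'I_d -> nat).
Local Notation m := (\sum_(i < d) n i)%N.
Local Notation inA' := (@inA C d n).
Local Notation blk := (@tagnat.sig1 d n).
Local Notation EE0 := (@E C d n).

Lemma diagpartB (a : C) (X Y : 'M[C]_m) : diagpart (a *: X - Y) = a *: diagpart X - diagpart Y.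
Proof.
rewrite !diagpart_sum scaler_sumr -sumrB; apply: eq_bigr => k _ /=.
by rewrite mulmxBr mulmxBl -scalemxAr -scalemxAl.
Qed.

Lemma supp_inA (S Q W : 'M[C]_m) : inA' S -> herm S -> herm Q -> Q *m S = S -> Q = W *m S ->
  inA' Q.
Proof.
move=> /inA_comm AS hS hQ QS QW; apply/inA_comm => k.
have hE := E_herm C n k; rewrite /herm in hE hS hQ.
have QW' : Q = S *m adjmx W by rewrite -hQ QW adjmx_mul hS.
have ES : EE0 k *m Q = S *m (EE0 k *m adjmx W) by rewrite {1}QW' mulmxA AS -mulmxA.
have e1 : EE0 k *m Q = Q *m EE0 k *m Q.
  by rewrite -mulmxA ES [Q *m (S *m _)]mulmxA QS.
have e2 : Q *m EE0 k = Q *m EE0 k *m Q.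
  by have := congr1 (@adjmx C m m) e1; rewrite !adjmx_mul hQ hE mulmxA.
by rewrite e1 -e2.
Qed.

Lemma diagpart_nz (P : 'M[C]_m) : herm P -> P *m P = P -> P <> 0 -> diagpart P <> 0.
Proof.
move=> hP PP Pn0 D0; apply: Pn0.
have hk k : P *m EE0 k = 0.
  apply: adj_mul_eq0.
  have -> : adjmx (P *m EE0 k) *m (P *m EE0 k) = EE0 k *m P *m EE0 k.
    by rewrite adjmx_mul E_herm hP -mulmxA [P *m (P *m _)]mulmxA PP mulmxA.
  have pk j : pos (EE0 j *m P *m EE0 j).
    by have := pos_conj (EE0 j) (pos_proj hP PP); rewrite E_herm.
  have h1 : 1%:M *m diagpart P = 0 by rewrite D0 mulmx0.
  have hl : lem (EE0 k *m P *m EE0 k) (diagpart P).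
    exists 1; split => //; rewrite scale1r diagpart_sum.
    rewrite [X in pos (X - _)](bigD1 k) //= addrC addrK.
    apply: big_ind => [|A B|j _]; [exact: pos0 | exact: pos_add | exact: pk].
  by have := lem_ker (pk k) hl h1; rewrite mul1mx.
rewrite -[P]mulmx1 -(sumE C n) mulmx_sumr; apply: big1 => k _; exact: hk.
Qed.


Variable tau : {linear 'M[C]_m -> 'M[C]_m}.
Hypothesis tauA : @maps_A C d n tau.
Hypothesis tauP : forall X, inA' X -> pos X -> pos (tau X).

Lemma irr_easy : irreducible_on (@whole C m) (canon_ext tau) -> irreducible_on inA' tau.
Proof.
move=> Hirr [P [AP Pproj Pn0 Pn1 Hinv]]; apply: Hirr; exists P; split => // X _.
have [Y [_ eY]] := Hinv (diagpart X) (inA_diagpart X).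
by exists Y; split => //; rewrite /canon_ext diagpart_conj.
Qed.

Lemma irr_hard : irreducible_on inA' tau -> irreducible_on (@whole C m) (canon_ext tau).
Proof.
move=> Hirr [P [_ [Padj PP] Pn0 Pn1 Hinv]].
have hP : herm P by rewrite /herm -Padj.
apply: Hirr.
have [Y0 [_ eT]] := Hinv 1%:M I.
rewrite mulmx1 PP /canon_ext in eT.
set T := tau (diagpart P) in eT.
have KT : (1%:M - P) *m T = 0.
  by rewrite eT !mulmxA mulmxBl mul1mx PP subrr !mul0mx.
have AD : inA' (diagpart P) := inA_diagpart P.
have pD : pos (diagpart P) := pos_diagpart (pos_proj hP PP).
have Dn0 := diagpart_nz hP PP Pn0.
have key (Q : 'M_m) : inA' Q -> herm Q -> Q *m Q = Q -> Q <> 0 -> Q <> 1%:M ->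
   (forall Z, inA' Z -> pos Z -> Q *m Z *m Q = Z -> (1%:M - Q) *m tau Z = 0) ->
   exists P, [/\ inA' P, is_proj P, P <> 0, P <> 1%:M &
     forall X, inA' X -> exists Y, inA' Y /\ tau (P *m X *m P) = P *m Y *m P].
  move=> AQ hQ QQ Q0 Q1 H; exists Q; split => //.
  exact: (inv_crit tauA tauP AQ hQ QQ H).
have [Q0 [W0 [hQ0 Q0Q0 Q0D Q0W lQ0D]]] := supp_proj pD.
have AQ0 : inA' Q0 := supp_inA AD (pos_herm pD) hQ0 Q0D Q0W.
case: (eqVneq Q0 1%:M) => [Q0is1 | /eqP Q0n1].
  rewrite Q0is1 in lQ0D.
  set S1 := tau 1%:M.
  have pS1 : pos S1 := tauP (@inA1 C d n) (pos_proj (adjmx1 _ _) (mulmx1 _)).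
  have AS1 : inA' S1 := tauA (@inA1 C d n).
  have lS1T : lem S1 T.
    case: lQ0D => c [c0 pc]; exists c; split => //.
    by have := tauP (inAB (inAZ c AD) (@inA1 C d n)) pc; rewrite linearB linearZ.
  have KS1 := lem_ker pS1 lS1T KT.
  have [Q1 [W1 [hQ1 Q1Q1 Q1S Q1W lQ1S]]] := supp_proj pS1.
  have AQ1 := supp_inA AS1 (pos_herm pS1) hQ1 Q1S Q1W.
  have KQ1 := lem_ker (pos_proj hQ1 Q1Q1) lQ1S KS1.
  have Q1n1 : Q1 <> 1%:M.
    move=> e; apply: Pn1; move: KQ1; rewrite e mulmx1 => /eqP.
    by rewrite subr_eq0 => /eqP h; rewrite -h.
  have lZS1 Z : inA' Z -> pos Z -> lem (tau Z) S1.
    move=> AZ pZ; have [c [c0 pc]] := pos_bound pZ; exists c; split => //.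
    by have := tauP (inAB (inAZ c (@inA1 C d n)) AZ) pc; rewrite linearB linearZ.
  case: (eqVneq Q1 0) => [Q10 | /eqP Q1n0]; last first.
    apply: (key Q1) => // Z AZ pZ _.
    exact: (lem_ker (tauP AZ pZ) (lZS1 Z AZ pZ) (ker_proj Q1S)).
  have S10 : S1 = 0 by rewrite -Q1S Q10 mul0mx.
  have tau0 Z : inA' Z -> pos Z -> tau Z = 0.
    move=> AZ pZ; have := lem_ker (K := 1%:M) (tauP AZ pZ) (lZS1 Z AZ pZ).
    by rewrite S10 mulmx0 mul1mx => h; apply: h.
  have [s0 [s1 ns]] : exists s0 s1 : 'I_m, s0 <> s1.
    apply: NNPP => H.
    have all_eq : forall s t : 'I_m, s = t.
      by move=> s t; apply: NNPP => nst; apply: H; exists s, t.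
    by case: (proj_triv all_eq PP).
  pose E0 : 'M[C]_m := delta_mx s0 s0.
  apply: (key E0).
  - apply/inAE => s t; rewrite mxE.
    case: (eqVneq s s0) => [-> | ns0]; case: (eqVneq t s0) => [-> | nt0] //=;
      by rewrite ?eqxx ?andbF ?mulr0n.
  - by rewrite /herm; apply/matrixP => i j; rewrite !(adjmxE, mxE) conjC_nat andbC.
  - by rewrite mul_delta_mx.
  - by move/matrixP/(_ s0 s0); rewrite !mxE !eqxx => /eqP; rewrite oner_eq0.
  - move/matrixP/(_ s1 s1); rewrite !mxE eqxx.
    have /negPf -> : s1 != s0 by apply/eqP => e; apply: ns.
    by move=> /eqP; rewrite eqr_nat.
  - by move=> Z AZ pZ _; rewrite tau0 // mulmx0.
apply: (key Q0) => //.
  by move=> Q00; apply: Dn0; rewrite -Q0D Q00 mul0mx.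
move=> Z AZ pZ QZQ.
have lZD : lem Z (diagpart P) := lem_trans (lem_proj hQ0 Q0Q0 pZ QZQ) lQ0D.
have ptZ := tauP AZ pZ.
have lZT : lem (tau Z) T.
  case: lZD => c [c0 pc]; exists c; split => //.
  by have := tauP (inAB (inAZ c AD) AZ) pc; rewrite linearB linearZ.
have KZ := lem_ker ptZ lZT KT.
have fZ := proj_fix (pos_herm ptZ) hP KZ.
have lZP := lem_proj hP PP ptZ fZ.
have lZD' : lem (tau Z) (diagpart P).
  case: lZP => c [c0 pc]; exists c; split => //.
  by have := pos_diagpart pc; rewrite diagpartB (diagpart_id (tauA AZ)).
exact: (lem_ker ptZ lZD' (ker_proj Q0D)).
Qed.

End Main.


Lemma nilp (C : numClosedFieldType) k (M : 'M[C]_k) :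
  (forall a, eigenvalue M a -> a = 0) ->
  exists j, forall v : 'rV_k, iter j (fun w => w *m M) v = 0.
Proof.
case: k M => [|k] M H.
  by exists 0%N => v; apply/rowP => [[i hi]].
have [rs hrs] := closed_field_poly_normal (char_poly M).
rewrite (monicP (char_poly_monic M)) scale1r in hrs.
have rs0 z : z \in rs -> z = 0.
  by move=> zin; apply: H; rewrite eigenvalue_root_char hrs root_prod_XsubC.
have eX : char_poly M = 'X ^+ size rs.
  rewrite hrs; elim: rs rs0 {hrs} => [|z rs IH] rs0; first by rewrite big_nil expr0.
  rewrite big_cons IH; last by move=> y yin; apply: rs0; rewrite in_cons yin orbT.
  by rewrite (rs0 z (mem_head _ _)) subr0 /= exprS.
have M0 : M ^+ size rs = 0.
  by have := Cayley_Hamilton M; rewrite eX rmorphXn /= horner_mx_X.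
exists (size rs) => v.
have -> : iter (size rs) (fun w => w *m M) v = v *m M ^+ size rs.
  elim: (size rs) => [|j IH]; first by rewrite expr0 mulmx1.
  by rewrite iterS IH exprSr -mulmxA.
by rewrite M0 mulmx0.
Qed.

Section Spec.
Variables (C : numClosedFieldType) (d : nat) (n : 'I_d -> nat).
Local Notation m := (\sum_(i < d) n i)%N.
Local Notation inA' := (@inA C d n).
Variable tau : {linear 'M[C]_m -> 'M[C]_m}.
Hypothesis tauA : @maps_A C d n tau.

Definition cext (X : 'M[C]_m) : 'M[C]_m := tau (diagpart X).
Fact cext_lin : linear cext.
Proof. by move=> a X Y; rewrite /cext diagpart_lin linearP. Qed.
HB.instance Definition _ := GRing.isLinear.Build C 'M[C]_m 'M[C]_m *:%R cext cext_lin.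

Lemma eigA_whole l : eigenvalue_on inA' tau l -> eigenvalue_on (@whole C m) (canon_ext tau) l.
Proof. by move=> [X [AX X0 eX]]; exists X; split => //; rewrite /canon_ext diagpart_id. Qed.

Lemma eigW_A l : l != 0 -> eigenvalue_on (@whole C m) (canon_ext tau) l -> eigenvalue_on inA' tau l.
Proof.
move=> l0 [X [_ X0 eX]]; rewrite /canon_ext in eX.
have AX : inA' X.
  have -> : X = l^-1 *: (l *: X) by rewrite scalerA mulVf // scale1r.
  by rewrite -eX; apply/inAZ/tauA/inA_diagpart.
by exists X; split => //; rewrite -eX diagpart_id.
Qed.

Lemma iter_cext j Y : inA' Y -> iter j cext Y = iter j tau Y.
Proof.
move=> AY; elim: j => [|j IH] //=; rewrite IH /cext diagpart_id //.
by elim: j {IH} => [|j IHj] //=; apply: tauA.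
Qed.

Lemma ker_exists j Y : inA' Y -> Y <> 0 -> iter j tau Y = 0 ->
  exists Z, [/\ inA' Z, Z <> 0 & tau Z = 0].
Proof.
elim: j Y => [|j IH] Y AY Y0; first by [].
rewrite iterSr => h.
have [t0|tn0] := eqVneq (tau Y) 0; first by exists Y.
apply: (IH (tau Y)) => //; first exact: tauA.
by apply/eqP.
Qed.

Lemma spec_part r : spectral_radius_is inA' tau r <->
  spectral_radius_is (@whole C m) (canon_ext tau) r.
Proof.
split.
  move=> [[l0 [el0 hl0]] hall]; split; first by exists l0; split => //; apply: eigA_whole.
  move=> l el; have [->|ln0] := eqVneq l 0; first by rewrite -hl0 normr0 normr_ge0.
  exact/hall/eigW_A.
move=> [[l0 [el0 hl0]] hall]; split; last by move=> l el; apply/hall/eigA_whole.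
have [l00|ln0] := eqVneq l0 0; last by exists l0; split => //; apply: eigW_A.
have r0 : r = 0 by rewrite -hl0 l00 normr0.
have allz l : eigenvalue_on (@whole C m) (canon_ext tau) l -> l = 0.
  by move=> el; apply/eqP; rewrite -normr_le0 -r0 hall.
have [X0 [_ X0n _]] := el0.
have [s0 _] : exists s : 'I_m, True.
  apply: NNPP => H; apply: X0n; apply/matrixP => s t; case: H; by exists s.
pose M := lin_mx cext.
have eigM a : eigenvalue M a -> a = 0.
  move=> /eigenvalueP [v vM vn0]; apply: allz.
  exists (vec_mx v); split => //.
    by move=> h; move: vn0; rewrite -[v]vec_mxK h linear0 eqxx.
  change (cext (vec_mx v) = a *: vec_mx v).
  have := mul_vec_lin cext (vec_mx v); rewrite vec_mxK vM => /(congr1 vec_mx).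
  by rewrite mxvecK => <-; rewrite linearZ.
have [j hj] := nilp eigM.
have itj Y : iter j cext Y = 0.
  apply: (can_inj mxvecK); rewrite linear0 -(hj (mxvec Y)).
  elim: j {hj} => [|i IH] //=; by rewrite -IH mul_vec_lin.
have [Z [AZ Zn0 tZ]] : exists Z, [/\ inA' Z, Z <> 0 & tau Z = 0].
  apply: (ker_exists (j := j) (@inA1 C d n)).
    by move/matrixP/(_ s0 s0); rewrite !mxE eqxx => /eqP; rewrite oner_eq0.
  by rewrite -iter_cext ?itj //; apply: inA1.
exists 0; split; last by rewrite normr0 r0.
by exists Z; split => //; rewrite tZ scale0r.
Qed.
End Spec.

Unset Implicit Arguments.

Theorem proposition5p9 (C : numClosedFieldType) (d : nat) (n : 'I_d -> nat)
    (tau : {linear 'M[C]_(\sum_(i < d) n i) -> 'M[C]_(\sum_(i < d) n i)}) :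
  @maps_A C d n tau -> @cp_on_A C d n tau ->
  (irreducible_on (@inA C d n) tau <-> irreducible_on (@whole C _) (@canon_ext C d n tau)) /\
  (forall r : C, spectral_radius_is (@inA C d n) tau r <->
                 spectral_radius_is (@whole C _) (@canon_ext C d n tau) r).
Proof.
move=> hA hcp; have hP := cp_pos hcp.
split; first by split; [apply: irr_hard | apply: irr_easy].
by move=> r; apply: spec_part.
Qed.
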